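(* Let $K,G:[0,\infty)\to\mathbb{R}$ be continuous, let $f$ solve $f''+Kf=0$ with $f>0$ on $(0,\infty)$ and $\int_1^\infty f(t)^{-2}dt<\infty$, and let $m$ solve $m''+Gm=0$ with $m(0)=f(0)$, $m'(0)=f'(0)$. Suppose the support of $G-K$ is contained in a bounded interval $[a,b]\subset[1,\infty)$, and assume $\alpha(m)<\infty$. Then $$\int_a^b|Gm-Kf|\,dt\le(\alpha(m)+1)\|G-K\|_2\,\|f|_{[a,b]}\|_2+\alpha(m)\int_a^b|f''|\,dt,$$ $$\int_b^\infty|Gm-Kf|\,dt\le\alpha(m)\int_b^\infty|f''|\,dt,$$ and consequently $$\int_0^\infty|Gm-Kf|\,dt\le\alpha(m)\int_a^\infty|f''|\,dt+(\alpha(m)+1)\|G-K\|_2\,\|f|_{[a,b]}\|_2.$$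
   Context: Notation: $\|G-K\|_2:=\sqrt{\int_0^\infty|G-K|^2dt}$; $\|f|_{[a,b]}\|_2:=\sqrt{\int_a^b f(t)^2dt}$; $\sigma(t):=m(t)/f(t)-1$ for $t>0$; $\alpha(m):=\sup_{t>0}|\sigma(t)|$. *)

(* Defs.v *)
From Stdlib Require Import Reals Lra.
Open Scope R_scope.

Definition cont_nonneg (K : R -> R) : Prop :=
  forall t, 0 <= t -> forall eps, 0 < eps -> exists delta, 0 < delta /\
    forall s, 0 <= s -> Rabs (s - t) < delta -> Rabs (K s - K t) < eps.

Definition deriv_nonneg (f df : R -> R) : Prop :=
  forall t, 0 <= t -> forall eps, 0 < eps -> exists delta, 0 < delta /\
    forall h, h <> 0 -> Rabs h < delta -> 0 <= t + h ->
      Rabs ((f (t + h) - f t) / h - df t) < eps.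

Definition Rint (g : R -> R) (a b v : R) : Prop :=
  exists pr : Riemann_integrable g a b, RiemannInt pr = v.

Definition improper_int (g : R -> R) (a l : R) : Prop :=
  (forall T, a <= T -> exists v, Rint g a T v) /\
  forall eps, 0 < eps -> exists M, forall T v, M <= T -> a <= T ->
    Rint g a T v -> Rabs (v - l) < eps.

(* Main.v *)
Require Import Defs.
From Stdlib Require Import Reals Lra Lia Psatz Classical.
Open Scope R_scope.

Lemma Rmax_lip s t c : Rabs (Rmax s c - Rmax t c) <= Rabs (s - t).
Proof. unfold Rmax; destruct (Rle_dec s c); destruct (Rle_dec t c);
  unfold Rabs; repeat destruct Rcase_abs; lra. Qed.

Lemma cont_pos K t : cont_nonneg K -> 0 < t -> continuity_pt K t.
Proof.
  intros HK Ht eps Heps.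
  destruct (HK t (Rlt_le _ _ Ht) eps Heps) as [d [Hd H]].
  exists (Rmin d t); split. { apply Rmin_pos; lra. }
  intros x [[_ Hx] Hd']. simpl in *. unfold R_dist in *.
  assert (Rabs (x - t) < d) by (eapply Rlt_le_trans; [exact Hd'| apply Rmin_l]).
  assert (Rabs (x - t) < t) by (eapply Rlt_le_trans; [exact Hd'| apply Rmin_r]).
  apply H; auto. revert H1; unfold Rabs; destruct Rcase_abs; lra.
Qed.

Lemma cont_max0 K t : cont_nonneg K -> continuity_pt (fun s => K (Rmax s 0)) t.
Proof.
  intros HK eps Heps.
  assert (H0 : 0 <= Rmax t 0) by apply Rmax_r.
  destruct (HK _ H0 eps Heps) as [d [Hd H]].
  exists d; split; auto.
  intros x [_ Hd']. simpl in *. unfold R_dist in *.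
  apply H. apply Rmax_r. eapply Rle_lt_trans. apply Rmax_lip. auto.
Qed.

Lemma cont_Rmax c t : continuity_pt (fun s => Rmax s c) t.
Proof.
  intros eps Heps. exists eps; split; auto.
  intros x [_ Hd']. simpl in *. unfold R_dist in *.
  eapply Rle_lt_trans. apply Rmax_lip. auto.
Qed.

Lemma cont_max g c t : 0 < c -> (forall s, 0 < s -> continuity_pt g s) ->
  continuity_pt (fun s => g (Rmax s c)) t.
Proof.
  intros Hc Hg.
  apply (continuity_pt_comp (fun s => Rmax s c) g t (cont_Rmax c t)).
  apply Hg. eapply Rlt_le_trans; [exact Hc| apply Rmax_r].
Qed.

Lemma deriv_pos g dg t : deriv_nonneg g dg -> 0 < t -> derivable_pt_lim g t (dg t).
Proof.
  intros Hg Ht eps Heps.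
  destruct (Hg t (Rlt_le _ _ Ht) eps Heps) as [d [Hd H]].
  assert (Hp : 0 < Rmin d t) by (apply Rmin_pos; lra).
  exists (mkposreal _ Hp). simpl. intros h Hh Hlt.
  assert (Rabs h < d) by (eapply Rlt_le_trans; [exact Hlt| apply Rmin_l]).
  assert (Rabs h < t) by (eapply Rlt_le_trans; [exact Hlt| apply Rmin_r]).
  apply H; auto. revert H1; unfold Rabs; destruct Rcase_abs; lra.
Qed.

Lemma deriv_ext0 g dg : deriv_nonneg g dg -> dg 0 = 0 ->
  forall t, derivable_pt_lim (fun s => g (Rmax s 0)) t (dg (Rmax t 0)).
Proof.
  intros Hg H0 t eps Heps.
  destruct (Rlt_le_dec 0 t) as [Ht|Ht].
  - destruct (Hg t (Rlt_le _ _ Ht) eps Heps) as [d [Hd H]].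
    assert (Hp : 0 < Rmin d t) by (apply Rmin_pos; lra).
    exists (mkposreal _ Hp). simpl. intros h Hh Hlt.
    assert (Rabs h < d) by (eapply Rlt_le_trans; [exact Hlt| apply Rmin_l]).
    assert (Rabs h < t) by (eapply Rlt_le_trans; [exact Hlt| apply Rmin_r]).
    assert (0 < t + h) by (revert H2; unfold Rabs; destruct Rcase_abs; lra).
    rewrite !Rmax_left by lra. apply H; auto; lra.
  - destruct (Rle_lt_or_eq_dec _ _ Ht) as [Ht'|Ht'].
    + assert (Hp : 0 < - t) by lra.
      exists (mkposreal _ Hp). simpl. intros h Hh Hlt.
      assert (t + h < 0) by (revert Hlt; unfold Rabs; destruct Rcase_abs; lra).
      rewrite !Rmax_right by lra. rewrite H0.
      replace ((g 0 - g 0) / h - 0) with 0 by (field; auto).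
      rewrite Rabs_R0; auto.
    + subst t. destruct (Hg 0 (Rle_refl _) eps Heps) as [d [Hd H]].
      exists (mkposreal _ Hd). simpl. intros h Hh Hlt.
      rewrite (Rmax_left 0 0) by lra.
      destruct (Rlt_le_dec 0 h).
      * rewrite Rmax_left by lra. apply H; auto; lra.
      * rewrite Rmax_right by lra. rewrite H0.
        replace ((g 0 - g 0) / h - 0) with 0 by (field; auto).
        rewrite Rabs_R0; auto.
Qed.

Lemma deriv_minus g1 d1 g2 d2 : deriv_nonneg g1 d1 -> deriv_nonneg g2 d2 ->
  deriv_nonneg (fun t => g1 t - g2 t) (fun t => d1 t - d2 t).
Proof.
  intros H1 H2 t Ht eps Heps.
  destruct (H1 t Ht (eps/2) ltac:(lra)) as [e1 [He1 K1]].
  destruct (H2 t Ht (eps/2) ltac:(lra)) as [e2 [He2 K2]].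
  exists (Rmin e1 e2); split. { apply Rmin_pos; lra. }
  intros h Hh Hlt Hth.
  assert (Rabs h < e1) by (eapply Rlt_le_trans; [exact Hlt| apply Rmin_l]).
  assert (Rabs h < e2) by (eapply Rlt_le_trans; [exact Hlt| apply Rmin_r]).
  specialize (K1 h Hh H Hth). specialize (K2 h Hh H0 Hth).
  replace ((g1 (t + h) - g2 (t + h) - (g1 t - g2 t)) / h - (d1 t - d2 t)) with
    (((g1 (t + h) - g1 t) / h - d1 t) - ((g2 (t + h) - g2 t) / h - d2 t)) by (field; auto).
  eapply Rle_lt_trans. apply Rabs_triang. rewrite Rabs_Ropp. lra.
Qed.

Lemma Rint_uniq g x y v w : Rint g x y v -> Rint g x y w -> v = w.
Proof. intros [p1 <-] [p2 <-]. apply RiemannInt_P5. Qed.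

Lemma Rint_lin g1 g2 x y l v1 v2 : Rint g1 x y v1 -> Rint g2 x y v2 ->
  Rint (fun t => g1 t + l * g2 t) x y (v1 + l * v2).
Proof.
  intros [p1 <-] [p2 <-]. exists (RiemannInt_P10 l p1 p2). apply RiemannInt_P13.
Qed.

Lemma Rint_le g1 g2 x y v1 v2 : x <= y -> (forall t, x < t < y -> g1 t <= g2 t) ->
  Rint g1 x y v1 -> Rint g2 x y v2 -> v1 <= v2.
Proof. intros Hxy H [p1 <-] [p2 <-]. apply RiemannInt_P19; auto. Qed.

Lemma Rint_ext g1 g2 x y v : x <= y -> (forall t, x <= t <= y -> g1 t = g2 t) ->
  Rint g1 x y v -> Rint g2 x y v.
Proof.
  intros Hxy H [p1 <-].
  assert (Hfg : forall t, Rmin x y <= t <= Rmax x y -> g1 t = g2 t).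
  { intros t Ht. apply H. rewrite Rmin_left, Rmax_right in Ht; auto. }
  pose (p2 := @Riemann_integrable_ext g1 g2 x y Hfg p1).
  exists p2. apply Rle_antisym; apply RiemannInt_P19; auto;
    intros t Ht; rewrite H; lra.
Qed.

Lemma Rint_chasles g x y z v1 v2 : Rint g x y v1 -> Rint g y z v2 -> Rint g x z (v1 + v2).
Proof.
  intros [p1 <-] [p2 <-]. exists (RiemannInt_P24 p1 p2). symmetry; apply RiemannInt_P26.
Qed.

Lemma Rint_split g x y z v : Rint g x z v -> x <= y <= z ->
  exists v1 v2, Rint g x y v1 /\ Rint g y z v2 /\ v = v1 + v2.
Proof.
  intros [p <-] Hy.
  pose (p1 := RiemannInt_P22 p Hy). pose (p2 := RiemannInt_P23 p Hy).
  exists (RiemannInt p1), (RiemannInt p2). split; [exists p1; auto|].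
  split; [exists p2; auto|]. symmetry. apply RiemannInt_P26.
Qed.

Lemma Rint_cont g x y : x <= y -> (forall t, x <= t <= y -> continuity_pt g t) ->
  exists v, Rint g x y v.
Proof.
  intros Hxy H. pose (p := @continuity_implies_RiemannInt g x y Hxy H).
  exists (RiemannInt p). exists p; auto.
Qed.

Lemma Rint_zero x y : Rint (fun _ => 0) x y 0.
Proof.
  exists (RiemannInt_P14 x y 0). exact (eq_trans (RiemannInt_P15 _) (Rmult_0_l _)).
Qed.

Lemma Rint_nonneg g x y v : x <= y -> (forall t, x < t < y -> 0 <= g t) -> Rint g x y v -> 0 <= v.
Proof. intros. apply (Rint_le (fun _ => 0) g x y 0 v); auto using Rint_zero. Qed.

Lemma Rint_refl g x : Rint g x x 0.
Proof. exists (RiemannInt_P7 g x). apply RiemannInt_P9. Qed.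

Lemma Rint_mono g x T T' v v' : (forall t, x <= t -> 0 <= g t) -> x <= T -> T <= T' ->
  Rint g x T v -> Rint g x T' v' -> v <= v'.
Proof.
  intros Hg H1 H2 I1 I2.
  destruct (Rint_split _ _ _ _ _ I2 (conj H1 H2)) as [w1 [w2 [J1 [J2 ->]]]].
  rewrite (Rint_uniq _ _ _ _ _ I1 J1).
  assert (0 <= w2). { apply (Rint_nonneg g T T'); auto. intros; apply Hg; lra. }
  lra.
Qed.

Lemma imp_bound g x L T v : improper_int g x L -> (forall t, x <= t -> 0 <= g t) ->
  x <= T -> Rint g x T v -> v <= L.
Proof.
  intros [Hex Hcv] Hg HT Hv.
  destruct (Rle_lt_dec v L) as [|Hlt]; auto. exfalso.
  destruct (Hcv (v - L) ltac:(lra)) as [M HM].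
  destruct (Hex (Rmax M T) ltac:(eapply Rle_trans; [exact HT| apply Rmax_r])) as [v' Hv'].
  assert (v <= v') by (apply (Rint_mono g x T (Rmax M T)); auto; apply Rmax_r).
  specialize (HM _ _ (Rmax_l M T) ltac:(eapply Rle_trans; [exact HT| apply Rmax_r]) Hv').
  revert HM; unfold Rabs; destruct Rcase_abs; lra.
Qed.

Lemma imp_exists g x B : (forall t, x <= t -> 0 <= g t) ->
  (forall T, x <= T -> exists v, Rint g x T v) ->
  (forall T v, x <= T -> Rint g x T v -> v <= B) ->
  exists J, improper_int g x J /\ J <= B.
Proof.
  intros Hg Hex HB.
  set (E := fun v => exists T, x <= T /\ Rint g x T v).
  assert (Hb : bound E). { exists B. intros v [T [HT Hv]]. eapply HB; eauto. }
  assert (Hne : exists v, E v). { exists 0, x. split; [lra| apply Rint_refl]. }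
  destruct (completeness E Hb Hne) as [J [HJ1 HJ2]].
  exists J. split.
  - split; auto. intros eps Heps.
    assert (exists v0, E v0 /\ J - eps < v0).
    { apply NNPP; intro Hn. assert (J <= J - eps); [|lra].
      apply HJ2. intros w Hw. destruct (Rle_lt_dec w (J - eps)); auto.
      exfalso; apply Hn; eauto. }
    destruct H as [v0 [[T0 [HT0 Hv0]] Hlt]].
    exists T0. intros T v HT HxT Hv.
    assert (v0 <= v) by (apply (Rint_mono g x T0 T); auto).
    assert (v <= J) by (apply HJ1; exists T; auto).
    unfold Rabs; destruct Rcase_abs; lra.
  - apply HJ2. intros v [T [HT Hv]]. eapply HB; eauto.
Qed.

Lemma imp_shift g x y L D : improper_int g x L -> Rint g x y D -> x <= y ->
  improper_int g y (L - D).
Proof.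
  intros [Hex Hcv] HD Hxy. split.
  - intros T HT. destruct (Hex T ltac:(lra)) as [v Hv].
    destruct (Rint_split _ _ _ _ _ Hv (conj Hxy HT)) as [v1 [v2 [H1 [H2 _]]]].
    eauto.
  - intros eps Heps. destruct (Hcv eps Heps) as [M HM].
    exists (Rmax M y). intros T v HT HyT Hv.
    assert (Hc := Rint_chasles _ _ _ _ _ _ HD Hv).
    specialize (HM _ _ ltac:(eapply Rle_trans; [apply Rmax_l| exact HT]) ltac:(lra) Hc).
    replace (v - (L - D)) with (D + v - L) by ring. auto.
Qed.

Lemma key_ineq u v K C : Rabs K <= C - 1 ->
  2 * u * v * (1 - K) - C * (u * u + v * v) <= 0.
Proof.
  intros HK.
  assert (H1 : Rabs (2 * u * v) <= u * u + v * v).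
  { assert (0 <= (u+v)*(u+v)) by apply Rle_0_sqr. assert (0 <= (u-v)*(u-v)) by apply Rle_0_sqr. unfold Rabs; destruct Rcase_abs; lra. }
  assert (H2 : Rabs (1 - K) <= C).
  { eapply Rle_trans. unfold Rminus. apply Rabs_triang. rewrite Rabs_Ropp, Rabs_R1. lra. }
  assert (2 * u * v * (1 - K) <= Rabs (2 * u * v) * Rabs (1 - K)).
  { rewrite <- Rabs_mult. apply Rle_abs. }
  assert (0 <= Rabs (2*u*v)) by apply Rabs_pos.
  assert (0 <= Rabs (1 - K)) by apply Rabs_pos.
  assert (Rabs (2 * u * v) * Rabs (1 - K) <= (u*u+v*v) * C).
  { apply Rmult_le_compat; auto. }
  lra.
Qed.

Lemma uniq (K f df ddf m dm ddm : R -> R) a : 0 < a -> cont_nonneg K ->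
  deriv_nonneg f df -> deriv_nonneg df ddf -> deriv_nonneg m dm -> deriv_nonneg dm ddm ->
  (forall t, 0 <= t <= a -> ddm t - ddf t = - K t * (m t - f t)) ->
  m 0 = f 0 -> dm 0 = df 0 -> forall t, 0 <= t <= a -> m t = f t.
Proof.
  intros Ha HK Hf1 Hf2 Hm1 Hm2 Hode H0 H1.
  set (u := fun t => m t - f t). set (v := fun t => dm t - df t).
  set (w := fun t => ddm t - ddf t).
  assert (Du : deriv_nonneg u v) by (apply deriv_minus; auto).
  assert (Dv : deriv_nonneg v w) by (apply deriv_minus; auto).
  assert (u0 : u 0 = 0) by (unfold u; lra).
  assert (v0 : v 0 = 0) by (unfold v; lra).
  assert (w0 : w 0 = 0). { unfold w. rewrite Hode by lra. fold (u 0). rewrite u0; ring. }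
  set (U := fun s => u (Rmax s 0)). set (V := fun s => v (Rmax s 0)).
  set (W := fun s => w (Rmax s 0)).
  assert (DU : forall t, derivable_pt_lim U t (V t)) by (apply deriv_ext0; auto).
  assert (DV : forall t, derivable_pt_lim V t (W t)) by (apply deriv_ext0; auto).
  destruct (continuity_ab_maj (fun s => Rabs (K (Rmax s 0))) 0 a ltac:(lra)) as [Mx [HMx _]].
  { intros c _. apply (continuity_pt_comp (fun s => K (Rmax s 0)) Rabs).
    apply cont_max0; auto. apply Rcontinuity_abs. }
  set (C := 1 + Rabs (K (Rmax Mx 0))).
  assert (HC : forall t, 0 <= t <= a -> Rabs (K t) <= C - 1).
  { intros t Ht. specialize (HMx t Ht). simpl in HMx. rewrite Rmax_left in HMx by lra.
    unfold C; lra. }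
  set (E := fun s => U s * U s + V s * V s).
  assert (DE : forall t, derivable_pt_lim E t (V t * U t + U t * V t + (W t * V t + V t * W t))).
  { intro t. apply derivable_pt_lim_plus; apply derivable_pt_lim_mult; auto. }
  set (X := fun s => exp (- C * s)).
  assert (DX : forall t, derivable_pt_lim X t (X t * (- C))).
  { intro t. unfold X.
    apply (derivable_pt_lim_comp (fun s => - C * s) exp).
    - pose proof (derivable_pt_lim_scal id (- C) t 1 (derivable_pt_lim_id t)) as Hs.
      rewrite Rmult_1_r in Hs. exact Hs.
    - apply derivable_pt_lim_exp. }
  set (F := fun s => E s * X s).
  set (F' := fun t => (V t * U t + U t * V t + (W t * V t + V t * W t)) * X t + E t * (X t * (- C))).
  assert (DF : forall t, derivable_pt_lim F t (F' t)).
  { intro t. apply derivable_pt_lim_mult; auto. }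
  assert (Xpos : forall t, 0 < X t) by (intro; apply exp_pos).
  assert (Enn : forall t, 0 <= E t).
  { intro t. unfold E. pose proof (Rle_0_sqr (U t)). pose proof (Rle_0_sqr (V t)).
    unfold Rsqr in *. lra. }
  assert (Fneg : forall c, 0 <= c <= a -> F' c <= 0).
  { intros c Hc. unfold F', E.
    assert (HW : W c = - K c * U c).
    { unfold W, U. rewrite Rmax_left by lra. unfold w, u. apply Hode; auto. }
    rewrite HW.
    pose proof (key_ineq (U c) (V c) (K c) C (HC c Hc)).
    specialize (Xpos c).
    replace ((V c * U c + U c * V c + (- K c * U c * V c + V c * (- K c * U c))) * X c +
      (U c * U c + V c * V c) * (X c * - C)) with
      (X c * (2 * U c * V c * (1 - K c) - C * (U c * U c + V c * V c))) by ring.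
    assert (0 <= - (2 * U c * V c * (1 - K c) - C * (U c * U c + V c * V c))) by lra.
    assert (0 <= X c * - (2 * U c * V c * (1 - K c) - C * (U c * U c + V c * V c))) by
      (apply Rmult_le_pos; lra).
    lra. }
  assert (F0 : F 0 = 0).
  { unfold F, E, U, V. rewrite Rmax_left by lra. rewrite u0, v0. ring. }
  intros t Ht.
  destruct (Rle_lt_or_eq_dec 0 t (proj1 Ht)) as [Hlt|Heq].
  2:{ subst t; auto. }
  destruct (MVT_cor2 F F' 0 t Hlt (fun c _ => DF c)) as [c [Hc1 Hc2]].
  assert (F' c <= 0) by (apply Fneg; lra).
  assert (HFt : F t <= 0).
  { rewrite F0 in Hc1. assert (F' c * (t - 0) <= 0).
    { assert (0 <= - F' c * (t - 0)) by (apply Rmult_le_pos; lra). lra. }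
    lra. }
  assert (HEt : E t = 0).
  { specialize (Xpos t). specialize (Enn t). unfold F in HFt.
    destruct (Rle_lt_or_eq_dec 0 (E t) Enn) as [Hp|Hp]; auto.
    assert (0 < E t * X t) by (apply Rmult_lt_0_compat; auto). lra. }
  unfold E, U in HEt. rewrite Rmax_left in HEt by lra.
  pose proof (Rle_0_sqr (u t)). pose proof (Rle_0_sqr (V t)). unfold Rsqr in *.
  assert (Hut : u t * u t = 0) by lra.
  apply Rmult_integral in Hut. unfold u in Hut. lra.
Qed.

Lemma cmul g1 g2 t : continuity_pt g1 t -> continuity_pt g2 t -> continuity_pt (fun s => g1 s * g2 s) t.
Proof. apply continuity_pt_mult. Qed.
Lemma cminus g1 g2 t : continuity_pt g1 t -> continuity_pt g2 t -> continuity_pt (fun s => g1 s - g2 s) t.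
Proof. apply continuity_pt_minus. Qed.
Lemma cabs g t : continuity_pt g t -> continuity_pt (fun s => Rabs (g s)) t.
Proof. intro H. apply (continuity_pt_comp g Rabs); auto. apply Rcontinuity_abs. Qed.
Lemma csq g t : continuity_pt g t -> continuity_pt (fun s => g s ^ 2) t.
Proof. intro H. apply (continuity_pt_comp g (fun x => x ^ 2)); auto.
  apply derivable_continuous_pt. apply derivable_pt_pow. Qed.

Lemma dcont g dg t : deriv_nonneg g dg -> 0 < t -> continuity_pt g t.
Proof. intros. apply derivable_continuous_pt. exists (dg t). apply deriv_pos; auto. Qed.

Lemma eq_limit G K c : cont_nonneg G -> cont_nonneg K -> 0 <= c ->
  (forall e, 0 < e -> exists s, 0 <= s /\ Rabs (s - c) < e /\ G s = K s) -> G c = K c.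
Proof.
  intros HG HK Hc H. apply NNPP; intro Hne.
  set (d := Rabs (G c - K c)).
  assert (Hd : 0 < d) by (apply Rabs_pos_lt; lra).
  destruct (HG c Hc (d/2) ltac:(lra)) as [e1 [He1 H1]].
  destruct (HK c Hc (d/2) ltac:(lra)) as [e2 [He2 H2]].
  destruct (H (Rmin e1 e2) ltac:(apply Rmin_pos; lra)) as [s [Hs [Hse Heq]]].
  assert (Rabs (s - c) < e1) by (eapply Rlt_le_trans; [exact Hse| apply Rmin_l]).
  assert (Rabs (s - c) < e2) by (eapply Rlt_le_trans; [exact Hse| apply Rmin_r]).
  specialize (H1 s Hs H0). specialize (H2 s Hs H3). rewrite Heq in H1.
  assert (d <= Rabs (K s - G c) + Rabs (K s - K c)).
  { unfold d. replace (G c - K c) with ((K s - K c) - (K s - G c)) by ring.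
    eapply Rle_trans. apply Rabs_triang. rewrite Rabs_Ropp. lra. }
  lra.
Qed.

Lemma cs_real P N F : 0 <= N -> 0 <= F -> (forall l, 0 < l -> 2 * P <= l * N + F / l) ->
  P <= sqrt N * sqrt F.
Proof.
  intros HN HF H.
  assert (0 <= sqrt N * sqrt F) by (apply Rmult_le_pos; apply sqrt_pos).
  destruct (Rle_lt_dec P 0); [lra|].
  destruct (Rle_lt_or_eq_dec _ _ HN) as [HN'|HN'].
  - destruct (Rle_lt_or_eq_dec _ _ HF) as [HF'|HF'].
    + assert (sN := sqrt_lt_R0 _ HN'). assert (sF := sqrt_lt_R0 _ HF').
      specialize (H (sqrt F / sqrt N) ltac:(apply Rdiv_lt_0_compat; auto)).
      replace (sqrt F / sqrt N * N + F / (sqrt F / sqrt N)) with (2 * (sqrt N * sqrt F)) in H.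
      { lra. }
      assert (EN : N = sqrt N * sqrt N) by (symmetry; apply sqrt_sqrt; lra).
      assert (EF : F = sqrt F * sqrt F) by (symmetry; apply sqrt_sqrt; lra).
      remember (sqrt N) as sn. remember (sqrt F) as sf. rewrite EN, EF.
      field. split; lra.
    + subst F. specialize (H (P / N) ltac:(apply Rdiv_lt_0_compat; auto)).
      replace (P / N * N + 0 / (P / N)) with P in H by (field; lra). lra.
  - subst N. specialize (H ((F + 1) / P) ltac:(apply Rdiv_lt_0_compat; lra)).
    replace ((F + 1) / P * 0 + F / ((F + 1) / P)) with (P * (F / (F + 1))) in H by (field; lra).
    assert (F / (F + 1) < 1) by (apply (Rmult_lt_reg_r (F+1)); [lra| field_simplify; lra]).
    assert (P * (F / (F + 1)) < P * 1) by (apply Rmult_lt_compat_l; lra). lra.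
Qed.

Lemma Rint_scal g x y c v : x <= y -> Rint g x y v -> Rint (fun t => c * g t) x y (c * v).
Proof.
  intros Hxy H. pose proof (Rint_lin _ _ _ _ c _ _ (Rint_zero x y) H) as H2.
  rewrite Rplus_0_l in H2. eapply Rint_ext; [exact Hxy| |exact H2]. intros; simpl; ring.
Qed.

Lemma cs_int g f x y N F P : x <= y -> (forall t, x < t < y -> 0 <= f t) ->
  Rint (fun t => (g t) ^ 2) x y N -> Rint (fun t => (f t) ^ 2) x y F ->
  Rint (fun t => Rabs (g t) * f t) x y P -> P <= sqrt N * sqrt F.
Proof.
  intros Hxy Hf HN HF HP. apply cs_real.
  - apply (Rint_nonneg (fun t => g t ^ 2) x y); auto. intros. apply pow2_ge_0.
  - apply (Rint_nonneg (fun t => f t ^ 2) x y); auto. intros. apply pow2_ge_0.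
  - intros l Hl.
    pose proof (Rint_scal _ _ _ l _ Hxy HN) as H1.
    pose proof (Rint_lin _ _ _ _ (/ l) _ _ H1 HF) as H2.
    pose proof (Rint_scal _ _ _ 2 _ Hxy HP) as H3.
    replace (l * N + F / l) with (l * N + / l * F) by (unfold Rdiv; ring).
    eapply (Rint_le _ _ x y); [exact Hxy| |exact H3|exact H2]. intros t Ht. simpl.
    specialize (Hf t Ht).
    assert (E : l * g t ^ 2 + / l * f t ^ 2 - 2 * (Rabs (g t) * f t) =
       (l * Rabs (g t) - f t) ^ 2 / l).
    { rewrite <- (pow2_abs (g t)). field. lra. }
    assert (0 <= (l * Rabs (g t) - f t) ^ 2 / l).
    { unfold Rdiv; apply Rmult_le_pos; [apply pow2_ge_0| apply Rlt_le, Rinv_0_lt_compat; lra]. }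
    lra.
Qed.

Lemma Rint_zero_on g x y v : x <= y -> (forall t, x <= t <= y -> g t = 0) -> Rint g x y v -> v = 0.
Proof.
  intros Hxy H Hv. assert (Rint g x y 0).
  { eapply Rint_ext; [exact Hxy| |apply Rint_zero]. intros; simpl; rewrite H; auto. }
  eapply Rint_uniq; eauto.
Qed.

Theorem lemma2p4
  (K G f df ddf m dm ddm : R -> R) (a b alpha : R)
  (hK : cont_nonneg K) (hG : cont_nonneg G)
  (hf1 : deriv_nonneg f df) (hf2 : deriv_nonneg df ddf)
  (hfode : forall t, 0 <= t -> ddf t + K t * f t = 0)
  (hfpos : forall t, 0 < t -> 0 < f t)
  (hfint : exists l, improper_int (fun t => / (f t) ^ 2) 1 l)
  (hm1 : deriv_nonneg m dm) (hm2 : deriv_nonneg dm ddm)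
  (hmode : forall t, 0 <= t -> ddm t + G t * m t = 0)
  (hm0 : m 0 = f 0) (hdm0 : dm 0 = df 0)
  (ha : 1 <= a) (hab : a <= b)
  (hsupp : forall t, 0 <= t -> (t < a \/ b < t) -> G t = K t)
  (halpha : is_lub (fun y => exists t, 0 < t /\ y = Rabs (m t / f t - 1)) alpha) :
  exists N2 F2 I1 D1,
    improper_int (fun t => (G t - K t) ^ 2) 0 N2 /\
    Rint (fun t => (f t) ^ 2) a b F2 /\
    Rint (fun t => Rabs (G t * m t - K t * f t)) a b I1 /\
    Rint (fun t => Rabs (ddf t)) a b D1 /\
    I1 <= (alpha + 1) * sqrt N2 * sqrt F2 + alpha * D1 /\
    (forall L, improper_int (fun t => Rabs (ddf t)) b L ->
       exists J, improper_int (fun t => Rabs (G t * m t - K t * f t)) b J /\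
         J <= alpha * L) /\
    (forall L, improper_int (fun t => Rabs (ddf t)) a L ->
       exists J, improper_int (fun t => Rabs (G t * m t - K t * f t)) 0 J /\
         J <= alpha * L + (alpha + 1) * sqrt N2 * sqrt F2).
Proof.
  assert (Ga : G a = K a).
  { apply eq_limit; auto; [lra|]. intros e He.
    exists (a - Rmin e a / 2).
    assert (0 < Rmin e a) by (apply Rmin_pos; lra).
    assert (Rmin e a <= e) by apply Rmin_l. assert (Rmin e a <= a) by apply Rmin_r.
    split; [lra|]. split.
    - replace (a - Rmin e a / 2 - a) with (- (Rmin e a / 2)) by ring.
      rewrite Rabs_Ropp, Rabs_right; lra.
    - apply hsupp; lra. }
  assert (Gb : G b = K b).
  { apply eq_limit; auto; [lra|]. intros e He.
    exists (b + e / 2). split; [lra|]. split.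
    - replace (b + e / 2 - b) with (e / 2) by ring. rewrite Rabs_right; lra.
    - apply hsupp; lra. }
  assert (GK0 : forall t, 0 <= t -> (t <= a \/ b <= t) -> G t = K t).
  { intros t Ht [H|H].
    - destruct (Rle_lt_or_eq_dec _ _ H); [apply hsupp; lra| subst; auto].
    - destruct (Rle_lt_or_eq_dec _ _ H); [apply hsupp; lra| subst; auto]. }
  assert (mf : forall t, 0 <= t <= a -> m t = f t).
  { apply (uniq K f df ddf m dm ddm a); auto; try lra.
    intros t Ht. pose proof (hmode t (proj1 Ht)). pose proof (hfode t (proj1 Ht)).
    rewrite (GK0 t) in H by lra. lra. }
  assert (alpha_nn : 0 <= alpha).
  { destruct halpha as [H _]. eapply Rle_trans; [apply (Rabs_pos (m 1 / f 1 - 1))|].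
    apply H. exists 1; split; auto; lra. }
  assert (sig : forall t, 0 < t -> Rabs (m t / f t - 1) <= alpha).
  { intros t Ht. destruct halpha as [H _]. apply H. exists t; auto. }
  assert (ddfE : forall t, 0 <= t -> Rabs (ddf t) = Rabs (K t * f t)).
  { intros t Ht. rewrite <- Rabs_Ropp. f_equal. pose proof (hfode t Ht); lra. }
  assert (cK : forall t, 0 < t -> continuity_pt K t) by (intros; apply cont_pos; auto).
  assert (cG : forall t, 0 < t -> continuity_pt G t) by (intros; apply cont_pos; auto).
  assert (cf : forall t, 0 < t -> continuity_pt f t) by (intros; eapply dcont; eauto).
  assert (cm : forall t, 0 < t -> continuity_pt m t) by (intros; eapply dcont; eauto).
  set (q := fun t => (G t - K t) ^ 2).
  set (h := fun t => Rabs (G t * m t - K t * f t)).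
  set (k := fun t => Rabs (G t - K t) * f t).
  set (dd := fun t => Rabs (ddf t)).
  set (dd' := fun t => Rabs (K t * f t)).
  assert (cq : forall t, 0 < t -> continuity_pt q t).
  { intros. apply csq, cminus; auto. }
  assert (ch : forall t, 0 < t -> continuity_pt h t).
  { intros. apply cabs, cminus; apply cmul; auto. }
  assert (ck : forall t, 0 < t -> continuity_pt k t).
  { intros. apply cmul; auto. apply cabs, cminus; auto. }
  assert (cdd' : forall t, 0 < t -> continuity_pt dd' t).
  { intros. apply cabs, cmul; auto. }
  assert (cf2 : forall t, 0 < t -> continuity_pt (fun s => f s ^ 2) t).
  { intros. apply csq; auto. }
  assert (intpos : forall g x y, 0 < x -> x <= y -> (forall t, 0 < t -> continuity_pt g t) ->
      exists v, Rint g x y v).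
  { intros g x y Hx Hxy Hc. apply Rint_cont; auto. intros; apply Hc; lra. }
  assert (intdd : forall x y, 0 < x -> x <= y -> exists v, Rint dd x y v).
  { intros x y Hx Hxy. destruct (intpos dd' x y Hx Hxy cdd') as [v Hv].
    exists v. eapply Rint_ext; [exact Hxy| |exact Hv]. intros; unfold dd, dd'.
    rewrite ddfE; auto; lra. }
  destruct (intpos q a b ltac:(lra) hab cq) as [N2 HN2].
  destruct (intpos _ a b ltac:(lra) hab cf2) as [F2 HF2].
  destruct (intpos h a b ltac:(lra) hab ch) as [I1 HI1].
  destruct (intdd a b ltac:(lra) hab) as [D1 HD1].
  destruct (intpos k a b ltac:(lra) hab ck) as [P HP].
  assert (ptw : forall t, 0 < t -> h t <= (alpha + 1) * k t + alpha * dd t).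
  { intros t Ht. unfold h, k, dd. rewrite ddfE by lra.
    specialize (sig t Ht). specialize (hfpos t Ht).
    set (s := m t / f t - 1) in *.
    assert (Em : m t = f t * (1 + s)) by (unfold s; field; lra).
    rewrite Em.
    replace (G t * (f t * (1 + s)) - K t * f t) with
      ((G t - K t) * f t * (1 + s) + (K t * f t) * s) by ring.
    eapply Rle_trans. apply Rabs_triang. rewrite !Rabs_mult.
    rewrite (Rabs_right (f t)) by lra.
    assert (Rabs (1 + s) <= alpha + 1).
    { eapply Rle_trans. apply Rabs_triang. rewrite Rabs_R1. lra. }
    assert (0 <= Rabs (G t - K t) * f t) by (apply Rmult_le_pos; [apply Rabs_pos|lra]).
    assert (Rabs (G t - K t) * f t * Rabs (1 + s) <= Rabs (G t - K t) * f t * (alpha + 1))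
      by (apply Rmult_le_compat_l; auto).
    assert (Rabs (K t) * f t * Rabs s <= Rabs (K t) * f t * alpha)
      by (apply Rmult_le_compat_l; auto; apply Rmult_le_pos; [apply Rabs_pos| lra]).
    lra. }
  assert (ptw2 : forall t, b <= t -> h t <= alpha * dd t).
  { intros t Ht. eapply Rle_trans. apply ptw; lra.
    unfold k. rewrite GK0 by lra. rewrite Rminus_diag, Rabs_R0. lra. }
  assert (hnn : forall t, 0 <= h t) by (intro; apply Rabs_pos).
  assert (ddnn : forall t, 0 <= dd t) by (intro; apply Rabs_pos).
  assert (HCS : P <= sqrt N2 * sqrt F2).
  { apply (cs_int (fun t => G t - K t) f a b); auto. intros; apply Rlt_le, hfpos; lra. }
  assert (Ineq1 : I1 <= (alpha + 1) * sqrt N2 * sqrt F2 + alpha * D1).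
  { pose proof (Rint_lin _ _ _ _ alpha _ _ (Rint_scal _ _ _ (alpha + 1) _ hab HP) HD1) as H.
    assert (I1 <= (alpha + 1) * P + alpha * D1).
    { eapply (Rint_le h _ a b); eauto. intros; apply ptw; lra. }
    assert ((alpha + 1) * P <= (alpha + 1) * (sqrt N2 * sqrt F2)) by (apply Rmult_le_compat_l; lra).
    lra. }
  assert (h0 : forall t, 0 <= t <= a -> h t = 0).
  { intros t Ht. unfold h. rewrite mf by auto. rewrite GK0 by lra.
    rewrite Rminus_diag, Rabs_R0; auto. }
  assert (q0 : forall t, 0 <= t -> (t <= a \/ b <= t) -> q t = 0).
  { intros t Ht H. unfold q. rewrite GK0 by auto. rewrite Rminus_diag. ring. }
  assert (ext0 : forall g, (forall t, 0 < t -> continuity_pt g t) ->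
      (forall t, 0 <= t <= a -> g t = 0) -> forall T, 0 <= T -> exists v, Rint g 0 T v).
  { intros g Hc Hz T HT.
    destruct (Rint_cont (fun s => g (Rmax s a)) 0 T HT) as [v Hv].
    { intros t _. apply cont_max; auto; lra. }
    exists v. eapply Rint_ext; [exact HT| |exact Hv]. intros t Ht. simpl.
    unfold Rmax; destruct (Rle_dec t a); auto. rewrite !Hz; auto; lra. }
  exists N2, F2, I1, D1.
  split; [|split; [auto|split; [auto|split; [auto|split; [auto|split]]]]].
  -
    split.
    + intros T HT. apply ext0; auto. intros t Ht; apply q0; lra.
    + intros eps Heps. exists b. intros T v HT H0T Hv.
      destruct (Rint_split _ 0 a T _ Hv ltac:(lra))
        as [v0 [v' [J0 [J' ->]]]].
      destruct (Rint_split _ _ _ _ _ J' (conj hab HT)) as [v1 [v2 [J1 [J2 ->]]]].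
      rewrite (Rint_zero_on q 0 a v0 ltac:(lra) ltac:(intros t Ht; apply q0; lra) J0).
      rewrite (Rint_zero_on q b T v2 HT ltac:(intros t Ht; apply q0; lra) J2).
      rewrite (Rint_uniq _ _ _ _ _ J1 HN2).
      replace (0 + (N2 + 0) - N2) with 0 by ring. rewrite Rabs_R0; auto.
  - intros L HL. apply imp_exists.
    + intros; apply hnn.
    + intros T HT. apply intpos; auto; lra.
    + intros T v HT Hv. destruct (intdd b T ltac:(lra) HT) as [w Hw].
      assert (v <= alpha * w).
      { eapply (Rint_le h _ b T); [exact HT| |exact Hv| apply Rint_scal; eauto].
        intros; apply ptw2; lra. }
      assert (w <= L) by (eapply imp_bound; eauto).
      assert (alpha * w <= alpha * L) by (apply Rmult_le_compat_l; auto). lra.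
  - intros L HL. apply imp_exists.
    + intros; apply hnn.
    + intros T HT. apply ext0; auto.
    + intros T v HT Hv.
      destruct (ext0 h ch h0 (Rmax T b) ltac:(eapply Rle_trans; [exact HT| apply Rmax_l])) as [v' Hv'].
      assert (v <= v') by (eapply (Rint_mono h 0 T (Rmax T b)); eauto; apply Rmax_l).
      assert (HTb : b <= Rmax T b) by apply Rmax_r.
      destruct (Rint_split _ 0 a (Rmax T b) _ Hv' ltac:(lra))
        as [v0 [v'' [J0 [J' E1]]]].
      destruct (Rint_split _ _ _ _ _ J' (conj hab HTb)) as [v1 [v2 [J1 [J2 E2]]]].
      rewrite (Rint_zero_on h 0 a v0 ltac:(lra) h0 J0) in E1.
      rewrite (Rint_uniq _ _ _ _ _ J1 HI1) in E2.
      destruct (intdd b (Rmax T b) ltac:(lra) HTb) as [w Hw].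
      assert (v2 <= alpha * w).
      { eapply (Rint_le h _ b (Rmax T b)); [exact HTb| |exact J2| apply Rint_scal; eauto].
        intros; apply ptw2; lra. }
      assert (D1 + w <= L).
      { eapply imp_bound; [exact HL| intros; apply ddnn| |apply (Rint_chasles _ _ _ _ _ _ HD1 Hw)]. lra. }
      assert (alpha * (D1 + w) <= alpha * L) by (apply Rmult_le_compat_l; auto). lra.
Qed.
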